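(* Let $r>1$, let $V:\mathbb{R}\to\mathbb{R}$ be convex and $L$-Lipschitz with $V'$ also $L$-Lipschitz, such that $m:=e^{-V}$ is a probability density, and let $\rho=e^{-(r+1)V}$. Let $0<c<C$ and $f\in\mathcal{P}_{c,C}$. Then there exists $\lambda\ge0$ depending only on $c$, $C$ and $V$ such that the $W_2$-Hessian of $\mathcal{F}_\rho[g]=\int\rho\, g^{-r}\,dx$ at $f$ is bounded below by $-\lambda$, i.e. for every smooth compactly supported test function $\phi$, $$2(r+1)\int\frac{\rho'}{f^r}\phi'\phi''\,dx+r(r+1)\int\frac{\rho}{f^r}(\phi'')^2\,dx+\int\frac{\rho''}{f^r}(\phi')^2\,dx\ \ge\ -\lambda\int(\phi')^2 f\,dx.$$
   Context: $\mathcal{P}_{c,C}:=\{g\in\mathcal{P}(\mathbb{R}):\ c\,m\le g\le C\,m\}$. *)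

(* Defs.v *)
From HB Require Import structures.
From mathcomp Require Import all_boot all_order all_algebra.
From mathcomp Require Import all_classical all_reals all_analysis.
Set Implicit Arguments. Unset Strict Implicit. Unset Printing Implicit Defensive.
Import Order.TTheory GRing.Theory Num.Theory.
Import numFieldNormedType.Exports.
Local Open Scope classical_set_scope.
Local Open Scope ring_scope.

Definition smooth (R : realType) (phi : R -> R) : Prop :=
  forall (n : nat) (x : R), derivable (iter n (@derive1 R R) phi) x 1.

Definition compact_support (R : realType) (phi : R -> R) : Prop :=
  compact (closure [set x | phi x != 0]).

Definition prob_density (R : realType) (g : R -> R) : Prop :=
  measurable_fun setT g /\ (forall x, 0 <= g x) /\
  (\int[@lebesgue_measure R]_x (g x)%:E = 1)%E.

Definition Pcc (R : realType) (c C : R) (V : R -> R) (g : R -> R) : Prop :=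
  prob_density g /\ forall x, c * expR (- V x) <= g x <= C * expR (- V x).

(* Main.v *)
Require Import Defs.
From HB Require Import structures.
From mathcomp Require Import all_boot all_order all_algebra.
From mathcomp Require Import all_classical all_reals all_analysis.
From mathcomp Require Import ring lra.
From mathcomp Require Import measurable_realfun.
Import Order.TTheory GRing.Theory Num.Theory.
Import numFieldNormedType.Exports.
Local Open Scope classical_set_scope.
Local Open Scope ring_scope.

Lemma lip_ge0 {R : realType} {L : R} {h : R^o -> R^o} : L.-lipschitz h -> 0 <= L.
Proof.
move=> hL; have := hL (1, 0) (conj I I) => /=.
rewrite subr0 normr1 mulr1; exact: le_trans.
Qed.

Lemma lip_derive_bound (R : realType) (L : R) (h : R^o -> R^o) :
  L.-lipschitz h -> forall x, `|derive1 h x| <= L.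
Proof.
move=> hL x; have L0 := lip_ge0 hL.
case: (pselect (derivable h x 1)) => dh; last first.
  by rewrite derive1E /derive dvgP // normr0.
rewrite derive1E /derive.
have qb : \forall t \near (0:R)^', `|t^-1 *: ((h \o shift x) (t *: 1) - h x)| <= L.
  near=> t.
  have t0 : t != 0 by near: t; exact: nbhs_dnbhs_neq.
  have := hL (t *: 1 + x, x) (conj I I) => /=.
  rewrite addrK => H.
  have tA : t%:A = t :> R^o by rewrite /GRing.scale /= mulr1.
  rewrite tA in H *.
  by rewrite normrZ normrV ?unitfE // ler_pdivrMl ?normr_gt0 // mulrC.
rewrite ler_norml; apply/andP; split.
  apply: (closed_cvg (fun y : R^o => - L <= y) (@closed_ge R^o (- L)) _ _ dh).

  by apply: filterS qb => t /=; rewrite ler_norml => /andP[].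
apply: (closed_cvg (fun y : R^o => y <= L) (@closed_le R^o L) _ _ dh).
by apply: filterS qb => t /=; rewrite ler_norml => /andP[] _.
Unshelve. all: by end_near. Qed.

Lemma rho_is_derive {R : realType} (r : R) (V : R^o -> R^o) :
  (forall x : R, derivable V x 1) -> forall x : R,
  is_derive x 1 (fun y : R => expR (- ((r + 1) * V y)))
    (- (r + 1) * derive1 V x * expR (- ((r + 1) * V x))).
Proof.
move=> hV x.
have hv : is_derive x (1:R) V (derive1 V x).
  by rewrite derive1E; exact: derivableP.
have hg : is_derive x (1:R) (fun y : R => - ((r + 1) * V y)) (- ((r + 1) * derive1 V x)).
  exact: is_deriveN.
have := is_derive1_comp (is_derive_expR _) hg.
move=> H; apply: (is_derive_eq H) => /=.
by ring.
Qed.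

Lemma derive1_rho {R : realType} (r : R) (V : R^o -> R^o) :
  (forall x : R, derivable V x 1) ->
  derive1 (fun y : R => expR (- ((r + 1) * V y))) =
  (fun x => - (r + 1) * derive1 V x * expR (- ((r + 1) * V x))).
Proof.
move=> hV; apply/funext => x.
by rewrite derive1E; apply: derive_val; exact: rho_is_derive.
Qed.

Lemma rho2_lb (R : realType) (r L : R) (V : R^o -> R^o) :
  0 < r + 1 ->
  (forall x : R, derivable V x 1) ->
  L.-lipschitz (derive1 V : R^o -> R^o) ->
  forall x, - (r + 1) * L * expR (- ((r + 1) * V x)) <=
    derive1 (derive1 (fun y : R => expR (- ((r + 1) * V y)))) x.
Proof.
move=> r1 hV hL x.
have L0 := lip_ge0 hL.
set rho := (fun y : R => expR (- ((r + 1) * V y))).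
have rho0 : forall y, 0 < rho y by move=> y; exact: expR_gt0.
rewrite derive1_rho //.
set k := - (r + 1).
set h := (fun x0 : R => k * derive1 V x0 * expR (- ((r + 1) * V x0))).
case: (pselect (derivable h x 1)) => dh; last first.
  rewrite derive1E /derive dvgP //.
  rewrite /k mulNr mulNr oppr_le0; apply: mulr_ge0; last exact/ltW/rho0.
  by apply: mulr_ge0 => //; exact: ltW.
have kr : forall y, k * rho y != 0.
  by move=> y; rewrite mulf_neq0 // ?(gt_eqF (rho0 y)) // /k oppr_eq0 (gt_eqF r1).
have dr : forall y, derivable rho y 1.
  by move=> y; have := @rho_is_derive R r V hV y => -[].
have dV' : derivable (derive1 V : R^o -> R^o) x 1.
  have -> : (derive1 V : R^o -> R^o) = (fun y => h y * (k * rho y)^-1).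
    apply/funext => y; have := kr y; rewrite /h /rho => ky.
    field; apply/andP; split; first exact: lt0r_neq0 (expR_gt0 _).
    by rewrite -opprD oppr_eq0 (gt_eqF r1).
  have dk : derivable (fun y => k * rho y) x 1 by exact: derivableZ.
  have dk' := derivableV (f := fun y => k * rho y) (kr x) dk.
  have H := derivableM (f := h) (g := fun y => (k * rho y)^-1) dh dk'.
  exact: H.
have hv2 : is_derive x (1:R) (derive1 V : R^o -> R^o) (derive1 (derive1 V : R^o -> R^o) x).
  by rewrite derive1E; exact: derivableP.
have hr : is_derive x (1:R) rho (k * derive1 V x * rho x) := @rho_is_derive R r V hV x.
have hk := is_deriveZ k hv2.
have H := is_deriveM (f := k \*: (derive1 V : R^o -> R^o)) (g := rho) hk hr.
have -> : derive1 h x = (k \*: (derive1 V : R^o -> R^o)) x *: (k * derive1 V x * rho x)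
   + rho x *: (k *: derive1 (derive1 V : R^o -> R^o) x).
  by rewrite derive1E; apply: derive_val.
have := @lip_derive_bound R L _ hL x; rewrite ler_norml => /andP[_ hb].
have e0 := rho0 x.
rewrite /= -/(rho x).
move: hb e0; set a := derive1 V x; set b := derive1 (derive1 V : R^o -> R^o) x; set e := rho x.
move=> hb e0.
change (k * L * e <= (k * a) * (k * a * e) + e * (k * b)).
have k0 : k < 0 by rewrite /k oppr_lt0.
have h1 : 0 <= (k * a) * (k * a * e) by rewrite mulrA; apply: mulr_ge0; [exact: sqr_ge0 | exact: ltW].
have h2 : k * L * e <= e * (k * b).
  rewrite mulrC; apply: ler_wpM2l; first exact: ltW.
  by rewrite ler_nM2l.
lra.
Qed.

Lemma derive1_loc0 {R : realType} (g : R -> R) (U : set R) (x : R) :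
  open U -> U x -> (forall y, U y -> g y = 0) -> derive1 g x = 0.
Proof.
move=> oU Ux g0.
rewrite derive1E (@near_eq_derive _ _ _ g (cst 0)) -?derive1E ?derive1_cst //.
have : nbhs x U by move: oU; rewrite openE => /(_ x Ux).
by apply: filterS => y /g0.
Qed.

Lemma iter_zero_off {R : realType} (phi : R -> R) n x :
  ~ closure [set x | phi x != 0] x -> iter n (@derive1 R R) phi x = 0.
Proof.
elim: n x => [|n IH] x Kx /=.
  by apply/eqP; apply: contra_notT Kx => H; apply: subset_closure.
apply: (@derive1_loc0 R _ (~` closure [set x | phi x != 0])) => //.
exact/closed_openC/closed_closure.
Qed.

Lemma cs_bound {R : realType} (g : R -> R) (K : set R) :
  compact K -> continuous g -> (forall x, ~ K x -> g x = 0) ->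
  exists M, forall x, `|g x| <= M.
Proof.
move=> cK gc g0.
have cK' := continuous_compact (continuous_subspaceT gc) cK.
have := compact_bounded cK'.
move=> [M0 [_ HM]].
exists (`|M0| + 1) => x.
case: (pselect (K x)) => Kx; last by rewrite g0 // normr0 addr_ge0.
have := HM (`|M0| + 1).
have lt : M0 < `|M0| + 1 by apply: (le_lt_trans (ler_norm M0)); rewrite ltrDl.
move=> /(_ lt); apply; by exists x.
Qed.

Lemma w_bound {R : realType} (r c v y : R) :
  0 < r + 1 -> 0 < c -> c * expR (- v) <= y ->
  0 < y /\ expR (- ((r + 1) * v)) / y `^ r <= expR (- ((r + 1) * ln c)) * y.
Proof.
move=> r1 c0 hy.
have y0 : 0 < y by apply: lt_le_trans hy; rewrite mulr_gt0 // expR_gt0.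
split => //.
have hl : ln c - v <= ln y.
  have := hy; rewrite -ler_ln ?posrE ?mulr_gt0 ?expR_gt0 //.
  by rewrite lnM ?posrE ?expR_gt0 // expRK.
rewrite /powR (gt_eqF y0) -expRB.
have -> : expR (- ((r + 1) * ln c)) * y = expR (- ((r + 1) * ln c) + ln y).
  by rewrite expRD lnK // posrE.
rewrite ler_expR.
have h2 : 0 <= ln y - (ln c - v) by rewrite subr_ge0.
have := mulr_ge0 (ltW r1) h2.
nra.
Qed.

Lemma nn_le {R : realType} (f1 f2 : R -> \bar R) :
  (forall x, 0 <= f1 x)%E -> (forall x, f1 x <= f2 x)%E ->
  (\int[@lebesgue_measure R]_x f1 x <= \int[@lebesgue_measure R]_x f2 x)%E.
Proof.
move=> f10 f12.
have f20 : forall x, (0 <= f2 x)%E by move=> x; exact: le_trans (f10 x) (f12 x).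
rewrite !ge0_integralTE //=.
apply: ge_ereal_sup => _ [h /= hf <-]; apply: ereal_sup_ubound; exists h => //= x.
exact: le_trans (hf x) (f12 x).
Qed.

Lemma Rint_lb {R : realType} (g h : R -> R) :
  (@lebesgue_measure R).-integrable setT (EFin \o h) ->
  (forall x, 0 <= h x) -> (forall x, - h x <= g x) ->
  - Rintegral (@lebesgue_measure R) setT h <= Rintegral (@lebesgue_measure R) setT g.
Proof.
move=> hi h0 hg.
have hf := integrable_fin_num measurableT hi.
rewrite /Rintegral [in X in _ <= X]integralE.
have a0 : (0 <= \int[@lebesgue_measure R]_x ((EFin \o g)^\+ x))%E.
  by apply: integral_ge0 => x _; exact: funepos_ge0.
have b0 : (0 <= \int[@lebesgue_measure R]_x ((EFin \o g)^\- x))%E.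
  by apply: integral_ge0 => x _; exact: funeneg_ge0.
have bH : (\int[@lebesgue_measure R]_x ((EFin \o g)^\- x) <=
           \int[@lebesgue_measure R]_x (h x)%:E)%E.
  apply: nn_le => x; first exact: funeneg_ge0.
  rewrite funenegE ge_max /= !lee_fin h0 andbT.
  by rewrite lerNl.
move: a0 b0 bH hf.
move: (\int[@lebesgue_measure R]_x ((EFin \o g)^\+ x))%E.
move: (\int[@lebesgue_measure R]_x ((EFin \o g)^\- x))%E.
move: (\int[@lebesgue_measure R]_x (h x)%:E)%E.
move=> [H| |] [B| |] [A| |] //=; rewrite ?lee_fin => a0 b0 bH _; lra.
Qed.

Lemma lip_cont {R : realType} (L : R) (h : R^o -> R^o) :
  L.-lipschitz h -> continuous h.
Proof.
move=> hL x; have L0 := lip_ge0 hL.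
apply/cvgrPdist_le => e e0.
have d0 : 0 < e / (L + 1) by rewrite divr_gt0 // ltr_pwDr.
have := @cvgr_dist_le _ _ _ (nbhs x) _ id x cvg_id _ d0.
move=> H; near=> y.
have hy : `|x - y| <= e / (L + 1) by near: y; exact: H.
apply: le_trans (hL (x, y) (conj I I)) _ => /=.
apply: le_trans (ler_wpM2l L0 hy) _.
rewrite mulrA ler_pdivrMr ?ltr_pwDr //.
by rewrite mulrC ler_pM2l // lerDl.
Unshelve. all: by end_near. Qed.

Lemma smooth_bound {R : realType} (phi : R -> R) n :
  smooth phi -> compact_support phi ->
  exists M, forall x, `|iter n (@derive1 R R) phi x| <= M.
Proof.
move=> hs hc; apply: (cs_bound _ _ hc).
  move=> x; apply: differentiable_continuous; apply/derivable1_diffP; exact: hs.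
exact: iter_zero_off.
Qed.

Lemma smooth_cont {R : realType} (phi : R -> R) n :
  smooth phi -> continuous (iter n (@derive1 R R) phi).
Proof.
move=> hs x; apply: differentiable_continuous; apply/derivable1_diffP; exact: hs.
Qed.

Lemma dom_integrable {R : realType} (g f : R -> R) (M : R) :
  measurable_fun setT g -> (@lebesgue_measure R).-integrable setT (EFin \o f) ->
  (forall x, `|g x| <= M * f x) -> (@lebesgue_measure R).-integrable setT (EFin \o g).
Proof.
move=> mg fi hg.
have fi' := integrableZl measurableT M fi.
have mg' : measurable_fun (setT : set (measurableTypeR R)) (EFin \o g).
  by apply/measurable_EFinP; exact: mg.
apply: (le_integrable measurableT mg' _ fi').
move=> x _; rewrite /comp -EFinM !abse_EFin lee_fin.
  exact: le_trans (hg x) (ler_norm _).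
Qed.

Lemma pd_integrable {R : realType} (f : R -> R) :
  prob_density f -> (@lebesgue_measure R).-integrable setT (EFin \o f).
Proof.
move=> [mf [f0 fi]]; apply/integrableP; split; first exact/measurable_EFinP.
rewrite (eq_integral (fun x : measurableTypeR R => (f x)%:E)); first by rewrite fi ltry.
by move=> x _; rewrite /comp abse_EFin ger0_norm.
Qed.

Lemma dom_w {R : realType} (f w s : R -> R) (kap S : R) :
  (@lebesgue_measure R).-integrable setT (EFin \o f) ->
  measurable_fun setT w -> measurable_fun setT s ->
  (forall x, 0 <= w x <= kap * f x) -> (forall x, `|s x| <= S) ->
  (@lebesgue_measure R).-integrable setT (EFin \o (fun x => w x * s x)).
Proof.
move=> fi mw ms hw hs.
apply: (@dom_integrable R _ f (kap * S) _ fi).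
  exact: measurable_funM.
move=> x; have /andP[w0 wk] := hw x.
rewrite normrM (ger0_norm w0) mulrAC.
apply: ler_pM => //; exact: le_trans (hs x).
Qed.

Lemma integrableZ' {R : realType} (g : R -> R) (k : R) :
  (@lebesgue_measure R).-integrable setT (EFin \o g) ->
  (@lebesgue_measure R).-integrable setT (EFin \o (fun x => k * g x)).
Proof.
move=> gi.
have -> : EFin \o (fun x => k * g x) = (fun x => k%:E * (EFin \o g) x)%E.
  by apply/funext => x; rewrite /comp EFinM.
exact: integrableZl.
Qed.

Lemma norm_mul_le {R : realType} (x y X Y : R) :
  `|x| <= X -> `|y| <= Y -> `|x * y| <= X * Y.
Proof. by move=> hx hy; rewrite normrM; apply: ler_pM. Qed.

Lemma pw_nonneg {R : realType} (r L wv vp a1 a2 : R) :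
  0 < r -> 0 <= wv -> `|vp| <= L ->
  0 <= 2 * (r + 1) * (wv * (- (r + 1) * vp * (a1 * a2))) + r * (r + 1) * (wv * a2 ^+ 2)
       + (r + 1) ^+ 3 * L ^+ 2 / r * (wv * a1 ^+ 2).
Proof.
move=> r0 w0; rewrite ler_norml => /andP[h1 h2].
have L0 : 0 <= L by lra.
have hL : 0 <= L ^+ 2 - vp ^+ 2.
  have -> : L ^+ 2 - vp ^+ 2 = (L - vp) * (L + vp) by ring.
  by apply: mulr_ge0; lra.
set E := (X in 0 <= X).
have eq : r * E = (r + 1) * wv * (r * a2 - (r + 1) * vp * a1) ^+ 2
                  + (r + 1) ^+ 3 * (L ^+ 2 - vp ^+ 2) * (wv * a1 ^+ 2).
  rewrite /E; field; exact: lt0r_neq0.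
have : 0 <= r * E.
  rewrite eq; apply: addr_ge0.
    apply: mulr_ge0; [apply: mulr_ge0; lra | exact: sqr_ge0].
  apply: mulr_ge0; [apply: mulr_ge0; [apply: exprn_ge0; lra | exact hL] |].
  by apply: mulr_ge0 => //; exact: sqr_ge0.
by move=> h; rewrite -(pmulr_rge0 _ r0).
Qed.

Lemma integrableD' {R : realType} (g h : R -> R) :
  (@lebesgue_measure R).-integrable setT (EFin \o g) ->
  (@lebesgue_measure R).-integrable setT (EFin \o h) ->
  (@lebesgue_measure R).-integrable setT (EFin \o (fun x => g x + h x)).
Proof.
move=> gi hi.
have -> : EFin \o (fun x => g x + h x) = ((EFin \o g) \+ (EFin \o h))%E.
  by apply/funext => x; rewrite /comp EFinD.
exact: integrableD.
Qed.

Theorem proposition2p4 (R : realType) (r L c C : R) (V : R^o -> R^o) :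
  1 < r ->
  convex_function setT V ->
  L.-lipschitz V ->
  (forall x : R, derivable V x 1) ->
  L.-lipschitz (derive1 V : R^o -> R^o) ->
  (\int[@lebesgue_measure R]_x (expR (- V x))%:E = 1)%E ->
  0 < c -> c < C ->
  let rho : R -> R := fun x => expR (- ((r + 1) * V x)) in
  exists lambda : R, 0 <= lambda /\
    forall f : R -> R, Pcc c C V f ->
    forall phi : R -> R, smooth phi -> compact_support phi ->
      2 * (r + 1) * Rintegral (@lebesgue_measure R) setT
          (fun x => derive1 rho x / (f x `^ r) * derive1 phi x * derive1n 2 phi x)
      + r * (r + 1) * Rintegral (@lebesgue_measure R) setT
          (fun x => rho x / (f x `^ r) * (derive1n 2 phi x) ^+ 2)
      + Rintegral (@lebesgue_measure R) setT
          (fun x => derive1n 2 rho x / (f x `^ r) * (derive1 phi x) ^+ 2)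
      >= - lambda * Rintegral (@lebesgue_measure R) setT
          (fun x => (derive1 phi x) ^+ 2 * f x).
Proof.
move=> r1 _ hL0 hV hL1 _ c0 _ rho.
have r10 : 0 < r + 1 by lra.
have r0 : 0 < r by lra.
have L0 := lip_ge0 hL1.
pose kap := expR (- ((r + 1) * ln c)).
have kap0 : 0 < kap by exact: expR_gt0.
pose K1 := (r + 1) ^+ 3 * L ^+ 2 / r.
pose K2 := (r + 1) * L.
have K10 : 0 <= K1 by rewrite /K1 divr_ge0 ?mulr_ge0 ?exprn_ge0 ?sqr_ge0 // ltW.
have K20 : 0 <= K2 by rewrite /K2 mulr_ge0 // ltW.
exists ((K1 + K2) * kap); split.
  by rewrite mulr_ge0 ?addr_ge0 // ltW.
move=> f [pdf fb] phi hs hc.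
have fi := @pd_integrable R f pdf.
have [mf [f0 _]] := pdf.
pose w x := rho x / f x `^ r.
have hw : forall x, 0 <= w x <= kap * f x.
  move=> x; have /andP[fl _] := fb x.
  have [fx0 wl] := w_bound r c (V x) (f x) r10 c0 fl.
  apply/andP; split; last exact: wl.
  by rewrite /w divr_ge0 ?powR_ge0 // ltW // expR_gt0.
have [B1 hB1] := smooth_bound phi 1 hs hc.
have [B2 hB2] := smooth_bound phi 2 hs hc.
have ma1 : measurable_fun setT (derive1 phi) := continuous_measurable_fun (smooth_cont phi 1 hs).
have ma2 : measurable_fun setT (derive1n 2 phi) := continuous_measurable_fun (smooth_cont phi 2 hs).
have mVp : measurable_fun setT (derive1 V : R -> R) := continuous_measurable_fun (@lip_cont R L _ hL1).
have mrho : measurable_fun setT rho.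
  apply: continuous_measurable_fun => x.
  apply: differentiable_continuous; apply/derivable1_diffP.
  by have := @rho_is_derive R r V hV x => -[].
have mw : measurable_fun setT w.
  apply: measurable_funM => //.
  have -> : (fun x => (f x `^ r)^-1) = (fun x => f x `^ (- r)).
    by apply/funext => x; rewrite powRN.
  exact: measurableT_comp (measurable_powR _) mf.
have hVp : forall x, `|derive1 V x| <= L := @lip_derive_bound R L V hL0.
have drho : derive1 rho = (fun x => - (r + 1) * derive1 V x * rho x) := @derive1_rho R r V hV.
pose s1 x := - (r + 1) * derive1 V x * (derive1 phi x * derive1n 2 phi x).
have e1 : (fun x => derive1 rho x / (f x `^ r) * derive1 phi x * derive1n 2 phi x)
          = (fun x => w x * s1 x).
  by apply/funext => x; rewrite drho /w /s1; ring.
rewrite e1.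
have ms1 : measurable_fun setT s1.
  apply: measurable_funM; last exact: measurable_funM.
  by apply: measurable_funM => //; exact: measurable_cst.
have i1 : (@lebesgue_measure R).-integrable setT (EFin \o (fun x => w x * s1 x)).
  apply: (@dom_w R f w s1 kap ((r + 1) * L * (B1 * B2)) fi mw ms1 hw) => x.
  apply: norm_mul_le; last exact: norm_mul_le (hB1 x) (hB2 x).
  by apply: norm_mul_le (hVp x); rewrite normrN gtr0_norm.
have i2 : (@lebesgue_measure R).-integrable setT
            (EFin \o (fun x => w x * derive1n 2 phi x ^+ 2)).
  apply: (@dom_w R f w _ kap (B2 * B2) fi mw _ hw).
    by rewrite (_ : (fun x => _) = (fun x => derive1n 2 phi x * derive1n 2 phi x));
      [exact: measurable_funM | apply/funext => x; rewrite expr2].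
  by move=> x; rewrite expr2; exact: norm_mul_le (hB2 x) (hB2 x).
have iw : (@lebesgue_measure R).-integrable setT
            (EFin \o (fun x => w x * derive1 phi x ^+ 2)).
  apply: (@dom_w R f w _ kap (B1 * B1) fi mw _ hw).
    by rewrite (_ : (fun x => _) = (fun x => derive1 phi x * derive1 phi x));
      [exact: measurable_funM | apply/funext => x; rewrite expr2].
  by move=> x; rewrite expr2; exact: norm_mul_le (hB1 x) (hB1 x).
have iE : (@lebesgue_measure R).-integrable setT
            (EFin \o (fun x => derive1 phi x ^+ 2 * f x)).
  apply: (@dom_integrable R _ f (B1 * B1) _ fi).
    apply: measurable_funM => //.
    by rewrite (_ : (fun x => _) = (fun x => derive1 phi x * derive1 phi x));
      [exact: measurable_funM | apply/funext => x; rewrite expr2].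
  move=> x; rewrite normrM (ger0_norm (f0 x)); apply: ler_wpM2r => //.
  by rewrite expr2; exact: norm_mul_le (hB1 x) (hB1 x).
have hA : 0 <= 2 * (r + 1) * Rintegral (@lebesgue_measure R) setT (fun x => w x * s1 x)
   + r * (r + 1) * Rintegral (@lebesgue_measure R) setT (fun x => w x * derive1n 2 phi x ^+ 2)
   + K1 * Rintegral (@lebesgue_measure R) setT (fun x => w x * derive1 phi x ^+ 2).
  rewrite -!RintegralZl // -RintegralD //; last 2 first.
  - exact: integrableZ'.
  - exact: integrableZ'.
  rewrite -RintegralD //; last 2 first.
  - by apply: integrableD'; exact: integrableZ'.
  - exact: integrableZ'.
  apply: Rintegral_ge0 => x _.
  have /andP[w0 _] := hw x.
  exact: pw_nonneg.
have hB : - (K2 * Rintegral (@lebesgue_measure R) setT (fun x => w x * derive1 phi x ^+ 2))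
  <= Rintegral (@lebesgue_measure R) setT
       (fun x => derive1n 2 rho x / (f x `^ r) * (derive1 phi x) ^+ 2).
  rewrite -RintegralZl //.
  apply: Rint_lb.
  - exact: integrableZ'.
  - move=> x; have /andP[w0 _] := hw x.
    by apply: mulr_ge0 => //; apply: mulr_ge0 => //; exact: sqr_ge0.
  move=> x.
  have h : - (r + 1) * L * rho x <= derive1n 2 rho x := @rho2_lb R r L V r10 hV hL1 x.
  have p0 : 0 <= (f x `^ r)^-1 * derive1 phi x ^+ 2.
    by rewrite mulr_ge0 ?sqr_ge0 // invr_ge0 powR_ge0.
  have := ler_wpM2r p0 h.
  rewrite /K2 /w.
  move: (derive1n 2 rho x) (f x `^ r) (derive1 phi x ^+ 2) (rho x) => d q a e.
  move=> H.
  have -> : - ((r + 1) * L * (e / q * a)) = - (r + 1) * L * e * (q^-1 * a) by ring.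
  by have -> : d / q * a = d * (q^-1 * a) by ring.
have hC : Rintegral (@lebesgue_measure R) setT (fun x => w x * derive1 phi x ^+ 2)
   <= kap * Rintegral (@lebesgue_measure R) setT (fun x => derive1 phi x ^+ 2 * f x).
  rewrite -RintegralZl //.
  apply: le_Rintegral => //; first exact: integrableZ'.
  move=> x _; have /andP[_ wk] := hw x.
  rewrite [X in _ <= X]mulrCA [X in X <= _]mulrC.
  by apply: ler_wpM2l => //; exact: sqr_ge0.
have hD := ler_wpM2l (addr_ge0 K10 K20) hC.
move: hA hB hD.
set A := Rintegral (@lebesgue_measure R) setT (fun x => w x * s1 x).
set B := Rintegral (@lebesgue_measure R) setT (fun x => w x * derive1n 2 phi x ^+ 2).
set I3 := Rintegral (@lebesgue_measure R) setT (fun x => derive1n 2 rho x / (f x `^ r) * (derive1 phi x) ^+ 2).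
set Iw := Rintegral (@lebesgue_measure R) setT (fun x => w x * derive1 phi x ^+ 2).
set IE := Rintegral (@lebesgue_measure R) setT (fun x => derive1 phi x ^+ 2 * f x).
move=> hA hB hD.
lra.
Qed.
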